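(* There exists $M_1>\sqrt{2(n-1)}$ with the following property. Let $f$ be a solution of $\frac{f''}{1+(f')^2}=\left(\frac r2-\frac{n-1}{r}\right)f'-\frac f2$ with $f(\sqrt{2(n-1)})>0$, and suppose $f'(r)\le 0$ for all $r\ge\sqrt{2(n-1)}$ in its domain. Then $f(r)<0$ whenever $r>M_1$ and $f(r)$ is defined.
   Context: $n\ge2$ is a fixed integer; $f$ is a real function of $r>0$ defined on an interval containing $\sqrt{2(n-1)}$ (curves $(f(r),r)$ with this equation are the profile geodesics written as graphs over the $r$-axis). *)

(* Defs.v *)
From Stdlib Require Import Reals.
From Coquelicot Require Import Coquelicot.
Open Scope R_scope.

Definition profile_eq (n : nat) (f df d2f : R -> R) (r : R) : Prop :=
  d2f r / (1 + (df r)^2) = (r / 2 - (INR n - 1) / r) * df r - f r / 2.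

Definition is_profile_solution (n : nat) (a : R) (b : Rbar)
    (f df d2f : R -> R) : Prop :=
  forall r, a < r -> Rbar_lt (Finite r) b ->
    is_derive f r (df r) /\ is_derive df r (d2f r) /\ profile_eq n f df d2f r.

(* Main.v *)
Require Import Defs.
From Stdlib Require Import Reals Lra.
From Coquelicot Require Import Coquelicot.
Open Scope R_scope.

Lemma mvt_helper (g dg : R -> R) (x y : R) :
  x <= y -> (forall t, x <= t <= y -> is_derive g t (dg t)) ->
  exists c, x <= c <= y /\ g y - g x = dg c * (y - x).
Proof.
  intros Hxy Hd.
  destruct (MVT_gen g x y dg) as [c [Hc He]].
  - intros t Ht. apply Hd. rewrite Rmin_left in Ht by lra.
    rewrite Rmax_right in Ht by lra. lra.
  - intros t Ht. rewrite Rmin_left in Ht by lra.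
    rewrite Rmax_right in Ht by lra.
    apply continuity_pt_filterlim. apply (ex_derive_continuous g).
    exists (dg t). apply Hd. lra.
  - exists c. rewrite Rmin_left in Hc by lra. rewrite Rmax_right in Hc by lra.
    split; assumption.
Qed.

Theorem lemma2p5 (n : nat) (hn : (2 <= n)%nat) :
  exists M1 : R, sqrt (2 * (INR n - 1)) < M1 /\
    forall (a : R) (b : Rbar) (f df d2f : R -> R),
      0 <= a -> a < sqrt (2 * (INR n - 1)) ->
      Rbar_lt (Finite (sqrt (2 * (INR n - 1)))) b ->
      is_profile_solution n a b f df d2f ->
      0 < f (sqrt (2 * (INR n - 1))) ->
      (forall r, sqrt (2 * (INR n - 1)) <= r -> Rbar_lt (Finite r) b ->
         df r <= 0) ->
      forall r, M1 < r -> Rbar_lt (Finite r) b -> f r < 0.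
Proof.
  set (s := sqrt (2 * (INR n - 1))).
  assert (Hn : 2 <= INR n) by (apply (le_INR 2 n) in hn; simpl in hn; lra).
  assert (Hss : s * s = 2 * (INR n - 1)) by (apply sqrt_sqrt; lra).
  assert (Hs0 : 0 < s) by (apply sqrt_lt_R0; lra).
  exists (s + 2 * PI). split; [pose proof PI_RGT_0; lra|].
  intros a b f df d2f ha has hsb hsol hfpos hdf r hr hrb.
  pose proof PI_RGT_0 as HPI.
  apply Rnot_le_lt; intro Hfr.
  assert (Hb : forall t, t <= r -> Rbar_lt (Finite t) b).
  { intros t Ht. destruct b; simpl in *; lra. }
  assert (Hfnn : forall t, s <= t <= r -> 0 <= f t).
  { intros t Ht.
    destruct (mvt_helper f df t r) as [d [Hd He]]; [lra| |].
    - intros u Hu. apply (hsol u); [lra|apply Hb; lra].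
    - assert (df d <= 0) by (apply hdf; [lra|apply Hb; lra]).
      nra. }
  assert (Hd2 : forall t, s <= t <= r -> d2f t <= - f t / 2).
  { intros t Ht.
    destruct (hsol t) as [_ [_ Heq]]; [lra|apply Hb; lra|].
    unfold profile_eq in Heq.
    assert (Hdf : df t <= 0) by (apply hdf; [lra|apply Hb; lra]).
    assert (Hft : 0 <= f t) by (apply Hfnn; lra).
    assert (Hc : 0 <= t / 2 - (INR n - 1) / t).
    { assert (t * t >= s * s) by nra.
      replace (t / 2 - (INR n - 1) / t) with ((t*t - 2 * (INR n - 1)) / (2 * t))
        by (field; lra).
      apply Rdiv_le_0_compat; nra. }
    set (X := (t / 2 - (INR n - 1) / t) * df t - f t / 2) in *.
    assert (HX : X <= - f t / 2) by (unfold X; nra).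
    assert (Hp : 0 < 1 + df t ^ 2) by (simpl; nra).
    assert (d2f t = X * (1 + df t ^ 2)).
    { rewrite <- Heq. field. lra. }
    assert (0 <= df t ^ 2) by (simpl; nra).
    nra. }
  set (W := fun t => df t * sin ((t - s) / 2) - f t * (1/2) * cos ((t - s) / 2)).
  set (dW := fun t => (d2f t + f t / 4) * sin ((t - s) / 2)).
  destruct (mvt_helper W dW s (s + 2 * PI)) as [c [Hc He]]; [lra| |].
  - intros t Ht.
    destruct (hsol t) as [H1 [H2 _]]; [lra|apply Hb; lra|].
    unfold W, dW.
    assert (Hs1 : is_derive (fun t => sin ((t - s) / 2)) t (cos ((t - s) / 2) * (1/2))).
    { auto_derive; [exact I|]. unfold Rminus, Rdiv; ring. }
    assert (Hc1 : is_derive (fun t => cos ((t - s) / 2)) t (- sin ((t - s) / 2) * (1/2))).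
    { auto_derive; [exact I|]. unfold Rminus, Rdiv; ring. }
    replace ((d2f t + f t / 4) * sin ((t - s) / 2)) with
      ((d2f t * sin ((t - s) / 2) + df t * (cos ((t - s) / 2) * (1/2))) -
       ((df t * (1/2) + f t * 0) * cos ((t - s) / 2) + f t * (1/2) * (- sin ((t - s) / 2) * (1/2))))
      by (unfold Rminus, Rdiv; field).
    apply (@is_derive_minus R_AbsRing R_NormedModule).
    + apply (is_derive_mult df (fun t => sin ((t - s) / 2))); auto.
      intros; apply Rmult_comm.
    + apply (is_derive_mult (fun t => f t * (1/2)) (fun t => cos ((t - s) / 2))); auto.
      * apply (is_derive_mult f (fun _ => 1/2)); auto.
        apply (@is_derive_const R_AbsRing R_NormedModule). intros; apply Rmult_comm.
      * intros; apply Rmult_comm.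
  - unfold W, dW in He.
    replace ((s - s) / 2) with 0 in He by field.
    replace ((s + 2 * PI - s) / 2) with PI in He by field.
    rewrite sin_0, cos_0, sin_PI, cos_PI in He.
    assert (Hsin : 0 <= sin ((c - s) / 2)) by (apply sin_ge_0; lra).
    assert (d2f c <= - f c / 2) by (apply Hd2; lra).
    assert (0 <= f c) by (apply Hfnn; lra).
    assert (0 <= f (s + 2 * PI)) by (apply Hfnn; lra).
    assert ((d2f c + f c / 4) * sin ((c - s) / 2) <= 0) by nra.
    fold s in hfpos.
    nra.
Qed.
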